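(* $\mathfrak{G}\left[ (\mathbb{X}, \dagger) \right]_X$ is a Markov category.
   Context: Let $(\mathbb{X}, \dagger)$ be a dagger additive category: a category with a dagger (an identity-on-objects, involutive, contravariant functor $f \mapsto f^\dagger$), enriched in abelian groups with $(f+g)^\dagger = f^\dagger + g^\dagger$, and having all finite biproducts whose projections and injections satisfy $\pi_j^\dagger = \iota_j$. Fix an object $X \in \mathbb{X}$. A map $p: B \to B$ is $\dagger$-positive if $p = \phi^\dagger \circ \phi$ for some map $\phi: B \to D$. The Gauss construction $\mathfrak{G}\left[ (\mathbb{X}, \dagger) \right]_X$ is the category whose objects are those of $\mathbb{X}$, whose maps $A \to B$ are triples $(f,p,x)$ with $f: A \to B$, $p: B \to B$ $\dagger$-positive, and $x: X \to B$; identities are $(\mathsf{id}_A, 0, 0)$ and composition is $(g,q,y) \circ (f,p,x) = (g \circ f, q + g \circ p \circ g^\dagger, y + g \circ x)$. It is symmetric monoidal with $A \otimes B = A \oplus B$, $(f,p,x) \otimes (g,q,y) = \left(f \oplus g, p \oplus q, \begin{bmatrix} x \\ y \end{bmatrix}\right)$, unit the zero object $\mathsf{0}$, and symmetry $\mathsf{swap}_{A,B} = \left(\begin{bmatrix} 0 & \mathsf{id}_B \\ \mathsf{id}_A & 0 \end{bmatrix}, 0, 0\right)$. The copy map is $\mathsf{copy}_A = \left(\begin{bmatrix} \mathsf{id}_A \\ \mathsf{id}_A \end{bmatrix}, 0, 0\right): A \to A \otimes A$ and the delete is $\mathsf{del}_A = (0,0,0): A \to \mathsf{0}$. A Markov category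 is a symmetric monoidal category in which each object carries a cocommutative comonoid $(\mathsf{copy}_A, \mathsf{del}_A)$, coherent with the monoidal structure ($\mathsf{copy}_{A\otimes B} = (\mathsf{id}_A \otimes \mathsf{swap}_{A,B} \otimes \mathsf{id}_B)\circ(\mathsf{copy}_A \otimes \mathsf{copy}_B)$, $\mathsf{del}_{A\otimes B} = \mathsf{del}_A \otimes \mathsf{del}_B$), and such that $\mathsf{del}$ is natural ($\mathsf{del}_B \circ f = \mathsf{del}_A$ for all $f: A \to B$). *)

(* Defs.v *)
From mathcomp Require Import all_boot all_algebra.
Set Implicit Arguments. Unset Strict Implicit. Unset Printing Implicit Defensive.
Import GRing.Theory.
Local Open Scope ring_scope.

Record dac_data := DacData {
  ob : Type;
  hom : ob -> ob -> zmodType;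
  idm : forall A, hom A A;
  comp : forall A B C, hom B C -> hom A B -> hom A C;
  dag : forall A B, hom A B -> hom B A;
  zob : ob;
  bip : ob -> ob -> ob;
  pi1 : forall A B, hom (bip A B) A;
  pi2 : forall A B, hom (bip A B) B;
  in1 : forall A B, hom A (bip A B);
  in2 : forall A B, hom B (bip A B)
}.
Arguments idm {_} A.
Arguments comp {_ A B C} g f.
Arguments dag {_ A B} f.
Arguments zob {_}.
Arguments bip {_} A B.
Arguments pi1 {_ A B}.
Arguments pi2 {_ A B}.
Arguments in1 {_ A B}.
Arguments in2 {_ A B}.

Definition dac_axioms (C : dac_data) : Prop :=
  (forall (A B C' D : ob C) (h : hom C' D) (g : hom B C') (f : hom A B),
      comp h (comp g f) = comp (comp h g) f) /\
  (forall (A B : ob C) (f : hom A B), comp (idm B) f = f) /\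
  (forall (A B : ob C) (f : hom A B), comp f (idm A) = f) /\
  (forall (A B C' : ob C) (g g' : hom B C') (f : hom A B),
      comp (g + g') f = comp g f + comp g' f) /\
  (forall (A B C' : ob C) (g : hom B C') (f f' : hom A B),
      comp g (f + f') = comp g f + comp g f') /\
  (forall (A : ob C), dag (idm A) = idm A) /\
  (forall (A B C' : ob C) (g : hom B C') (f : hom A B),
      dag (comp g f) = comp (dag f) (dag g)) /\
  (forall (A B : ob C) (f : hom A B), dag (dag f) = f) /\
  (forall (A B : ob C) (f g : hom A B), dag (f + g) = dag f + dag g) /\
  (* zero object (empty biproduct) *)
  idm (@zob C) = 0 /\
  (forall (A B : ob C), comp (@pi1 C A B) in1 = idm A) /\
  (forall (A B : ob C), comp (@pi2 C A B) in2 = idm B) /\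
  (forall (A B : ob C), comp (@pi1 C A B) in2 = 0) /\
  (forall (A B : ob C), comp (@pi2 C A B) in1 = 0) /\
  (forall (A B : ob C), comp (@in1 C A B) pi1 + comp in2 pi2 = idm (bip A B)) /\
  (forall (A B : ob C), dag (@pi1 C A B) = in1) /\
  (forall (A B : ob C), dag (@pi2 C A B) = in2).

Record DagAddCat := { dac :> dac_data; dac_ax : dac_axioms dac }.

Section DacFacts.
Variable C : DagAddCat.
Let ax := dac_ax C.

Lemma compA' (A B C' D : ob C) (h : hom C' D) (g : hom B C') (f : hom A B) :
  comp h (comp g f) = comp (comp h g) f.
Proof. by case: ax. Qed.
Lemma comp1l (A B : ob C) (f : hom A B) : comp (idm B) f = f.
Proof. by case: ax => _ []. Qed.
Lemma compDl (A B C' : ob C) (g g' : hom B C') (f : hom A B) :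
  comp (g + g') f = comp g f + comp g' f.
Proof. by case: ax => _ [_ [_ []]]. Qed.
Lemma compDr (A B C' : ob C) (g : hom B C') (f f' : hom A B) :
  comp g (f + f') = comp g f + comp g f'.
Proof. by case: ax => _ [_ [_ [_ []]]]. Qed.
Lemma dag_comp (A B C' : ob C) (g : hom B C') (f : hom A B) :
  dag (comp g f) = comp (dag f) (dag g).
Proof. by case: ax => _ [_ [_ [_ [_ [_ []]]]]]. Qed.
Lemma dagK (A B : ob C) (f : hom A B) : dag (dag f) = f.
Proof. by case: ax => _ [_ [_ [_ [_ [_ [_ []]]]]]]. Qed.
Lemma dagD (A B : ob C) (f g : hom A B) : dag (f + g) = dag f + dag g.
Proof. by case: ax => _ [_ [_ [_ [_ [_ [_ [_ []]]]]]]]. Qed.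
Lemma pi1in1 (A B : ob C) : comp (@pi1 C A B) in1 = idm A.
Proof. by case: ax => _ [_ [_ [_ [_ [_ [_ [_ [_ [_ []]]]]]]]]]. Qed.
Lemma pi2in2 (A B : ob C) : comp (@pi2 C A B) in2 = idm B.
Proof. by case: ax => _ [_ [_ [_ [_ [_ [_ [_ [_ [_ [_ []]]]]]]]]]]. Qed.
Lemma pi1in2 (A B : ob C) : comp (@pi1 C A B) in2 = 0.
Proof. by case: ax => _ [_ [_ [_ [_ [_ [_ [_ [_ [_ [_ [_ []]]]]]]]]]]]. Qed.
Lemma pi2in1 (A B : ob C) : comp (@pi2 C A B) in1 = 0.
Proof. by case: ax => _ [_ [_ [_ [_ [_ [_ [_ [_ [_ [_ [_ [_ []]]]]]]]]]]]]. Qed.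
Lemma dag_pi1 (A B : ob C) : dag (@pi1 C A B) = in1.
Proof. by case: ax => _ [_ [_ [_ [_ [_ [_ [_ [_ [_ [_ [_ [_ [_ [_ []]]]]]]]]]]]]]]. Qed.
Lemma dag_pi2 (A B : ob C) : dag (@pi2 C A B) = in2.
Proof. by case: ax => _ [_ [_ [_ [_ [_ [_ [_ [_ [_ [_ [_ [_ [_ [_ []]]]]]]]]]]]]]]. Qed.
Lemma dag_in1 (A B : ob C) : dag (@in1 C A B) = pi1.
Proof. by rewrite -dag_pi1 dagK. Qed.
Lemma dag_in2 (A B : ob C) : dag (@in2 C A B) = pi2.
Proof. by rewrite -dag_pi2 dagK. Qed.

Lemma comp0l (A B C' : ob C) (f : hom A B) : comp (0 : hom B C') f = 0.
Proof.
have h := @compDl A B C' 0 0 f; rewrite addr0 in h.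
by apply: (addrI (comp (0 : hom B C') f)); rewrite -h addr0.
Qed.
Lemma comp0r (A B C' : ob C) (g : hom B C') : comp g (0 : hom A B) = 0.
Proof.
have h := @compDr A B C' g 0 0; rewrite addr0 in h.
by apply: (addrI (comp g (0 : hom A B))); rewrite -h addr0.
Qed.

Definition dpos (B : ob C) (p : hom B B) : Prop :=
  exists (D : ob C) (phi : hom B D), p = comp (dag phi) phi.

Lemma dpos0 (B : ob C) : dpos (0 : hom B B).
Proof. by exists zob, 0; rewrite comp0r. Qed.

Lemma dag_col (B D E : ob C) (a : hom B D) (b : hom B E) :
  comp (dag (comp in1 a + comp in2 b)) (comp in1 a + comp in2 b)
  = comp (dag a) a + comp (dag b) b.
Proof.
rewrite dagD !dag_comp dag_in1 dag_in2 compDl !compDr.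
rewrite -!compA' ![comp pi1 (comp _ _)]compA' ![comp pi2 (comp _ _)]compA'.
by rewrite pi1in1 pi1in2 pi2in1 pi2in2 !comp0l !comp0r !comp1l addr0 add0r.
Qed.

Lemma dpos_comp (B C' : ob C) (g : hom B C') (p : hom B B) (q : hom C' C') :
  dpos p -> dpos q -> dpos (q + comp g (comp p (dag g))).
Proof.
move=> [E [phi ->]] [D [psi ->]].
exists (bip D E), (comp in1 psi + comp in2 (comp phi (dag g))).
rewrite dag_col dag_comp dagK; congr (_ + _).
by rewrite -!compA'.
Qed.

Definition dsum (A B A' B' : ob C) (f : hom A A') (g : hom B B') :
  hom (bip A B) (bip A' B') :=
  comp in1 (comp f pi1) + comp in2 (comp g pi2).
Definition col (Y A B : ob C) (x : hom Y A) (y : hom Y B) : hom Y (bip A B) :=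
  comp in1 x + comp in2 y.

Lemma dpos_dsum (A B : ob C) (p : hom A A) (q : hom B B) :
  dpos p -> dpos q -> dpos (dsum p q).
Proof.
move=> [D [phi ->]] [E [psi ->]].
exists (bip D E), (comp in1 (comp phi pi1) + comp in2 (comp psi pi2)).
rewrite dag_col /dsum !dag_comp dag_pi1 dag_pi2.
by rewrite -!compA'.
Qed.

End DacFacts.
Arguments dsum {C A B A' B'} f g.
Arguments col {C Y A B} x y.

Record smc_data := SmcData {
  sob : Type;
  shom : sob -> sob -> Type;
  sid : forall A, shom A A;
  scomp : forall A B C, shom B C -> shom A B -> shom A C;
  stens : sob -> sob -> sob;
  stensm : forall A B C D, shom A B -> shom C D -> shom (stens A C) (stens B D);
  sunit : sob;
  sassoc : forall A B C, shom (stens (stens A B) C) (stens A (stens B C));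
  sassoc_inv : forall A B C, shom (stens A (stens B C)) (stens (stens A B) C);
  slunit : forall A, shom (stens sunit A) A;
  slunit_inv : forall A, shom A (stens sunit A);
  srunit : forall A, shom (stens A sunit) A;
  srunit_inv : forall A, shom A (stens A sunit);
  sswap : forall A B, shom (stens A B) (stens B A)
}.
Arguments sid {_} A.
Arguments scomp {_ A B C} g f.
Arguments stens {_} A B.
Arguments stensm {_ A B C D} f g.
Arguments sunit {_}.
Arguments sassoc {_} A B C.
Arguments sassoc_inv {_} A B C.
Arguments slunit {_} A.
Arguments slunit_inv {_} A.
Arguments srunit {_} A.
Arguments srunit_inv {_} A.
Arguments sswap {_} A B.

Definition is_symmetric_monoidal (M : smc_data) : Prop :=
  (forall (A B C D : sob M) (h : shom C D) (g : shom B C) (f : shom A B),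
      scomp h (scomp g f) = scomp (scomp h g) f) /\
  (forall (A B : sob M) (f : shom A B), scomp (sid B) f = f) /\
  (forall (A B : sob M) (f : shom A B), scomp f (sid A) = f) /\
  (forall (A B : sob M), stensm (sid A) (sid B) = sid (stens A B)) /\
  (forall (A1 A2 A3 B1 B2 B3 : sob M) (f : shom A1 A2) (g : shom A2 A3)
          (f' : shom B1 B2) (g' : shom B2 B3),
      stensm (scomp g f) (scomp g' f') = scomp (stensm g g') (stensm f f')) /\
  (forall (A A' B B' C C' : sob M) (f : shom A A') (g : shom B B') (h : shom C C'),
      scomp (sassoc A' B' C') (stensm (stensm f g) h)
      = scomp (stensm f (stensm g h)) (sassoc A B C)) /\
  (forall (A B C : sob M), scomp (sassoc A B C) (sassoc_inv A B C) = sid _) /\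
  (forall (A B C : sob M), scomp (sassoc_inv A B C) (sassoc A B C) = sid _) /\
  (forall (A A' : sob M) (f : shom A A'),
      scomp (slunit A') (stensm (sid sunit) f) = scomp f (slunit A)) /\
  (forall (A : sob M), scomp (slunit A) (slunit_inv A) = sid _) /\
  (forall (A : sob M), scomp (slunit_inv A) (slunit A) = sid _) /\
  (forall (A A' : sob M) (f : shom A A'),
      scomp (srunit A') (stensm f (sid sunit)) = scomp f (srunit A)) /\
  (forall (A : sob M), scomp (srunit A) (srunit_inv A) = sid _) /\
  (forall (A : sob M), scomp (srunit_inv A) (srunit A) = sid _) /\
  (forall (A B C D : sob M),
      scomp (sassoc A B (stens C D)) (sassoc (stens A B) C D)
      = scomp (stensm (sid A) (sassoc B C D))
          (scomp (sassoc A (stens B C) D) (stensm (sassoc A B C) (sid D)))) /\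
  (forall (A B : sob M),
      scomp (stensm (sid A) (slunit B)) (sassoc A sunit B)
      = stensm (srunit A) (sid B)) /\
  (forall (A A' B B' : sob M) (f : shom A A') (g : shom B B'),
      scomp (sswap A' B') (stensm f g) = scomp (stensm g f) (sswap A B)) /\
  (forall (A B : sob M), scomp (sswap B A) (sswap A B) = sid _) /\
  (forall (A B C : sob M),
      scomp (sassoc B C A) (scomp (sswap A (stens B C)) (sassoc A B C))
      = scomp (stensm (sid B) (sswap A C))
          (scomp (sassoc B A C) (stensm (sswap A B) (sid C)))).

(* the middle-four interchange (A (x) A) (x) (B (x) B) -> (A (x) B) (x) (A (x) B),
   i.e. id_A (x) swap_{A,B} (x) id_B with the canonical associators inserted *)
Definition smiddle (M : smc_data) (A B : sob M) :
  shom (stens (stens A A) (stens B B)) (stens (stens A B) (stens A B)) :=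
  scomp (sassoc_inv A B (stens A B))
   (scomp (stensm (sid A) (sassoc B A B))
    (scomp (stensm (sid A) (stensm (sswap A B) (sid B)))
     (scomp (stensm (sid A) (sassoc_inv A B B))
       (sassoc A A (stens B B))))).

Definition is_markov_category (M : smc_data)
    (copy : forall A : sob M, shom A (stens A A))
    (del : forall A : sob M, shom A sunit) : Prop :=
  is_symmetric_monoidal M /\
  (forall A : sob M,
      scomp (sassoc A A A) (scomp (stensm (copy A) (sid A)) (copy A))
      = scomp (stensm (sid A) (copy A)) (copy A)) /\
  (forall A : sob M,
      scomp (slunit A) (scomp (stensm (del A) (sid A)) (copy A)) = sid A) /\
  (forall A : sob M,
      scomp (srunit A) (scomp (stensm (sid A) (del A)) (copy A)) = sid A) /\
  (forall A : sob M, scomp (sswap A A) (copy A) = copy A) /\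
  (forall A B : sob M,
      copy (stens A B) = scomp (smiddle A B) (stensm (copy A) (copy B))) /\
  (forall A B : sob M,
      del (stens A B) = scomp (slunit sunit) (stensm (del A) (del B))) /\
  (forall (A B : sob M) (f : shom A B), scomp (del B) f = del A).

Section Gauss.
Variables (C : DagAddCat) (X : ob C).

Record gmap (A B : ob C) := GMap {
  gf : hom A B;
  gp : hom B B;
  gx : hom X B;
  gpos : dpos gp
}.

Definition gid (A : ob C) : gmap A A := @GMap A A (idm A) 0 0 (dpos0 A).

Definition gcomp (A B C' : ob C) (g : gmap B C') (f : gmap A B) : gmap A C' :=
  @GMap A C' (comp (gf g) (gf f))
    (gp g + comp (gf g) (comp (gp f) (dag (gf g))))
    (gx g + comp (gf g) (gx f))
    (dpos_comp (gf g) (gpos f) (gpos g)).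

Definition gtensm (A A' B B' : ob C) (f : gmap A A') (g : gmap B B') :
  gmap (bip A B) (bip A' B') :=
  @GMap (bip A B) (bip A' B') (dsum (gf f) (gf g)) (dsum (gp f) (gp g))
    (col (gx f) (gx g)) (dpos_dsum (gpos f) (gpos g)).

Definition gpure (A B : ob C) (f : hom A B) : gmap A B :=
  @GMap A B f 0 0 (dpos0 B).

Definition bassoc (A B C' : ob C) : hom (bip (bip A B) C') (bip A (bip B C')) :=
  comp in1 (comp pi1 pi1)
  + comp in2 (comp in1 (comp pi2 pi1) + comp in2 pi2).
Definition bassoc_inv (A B C' : ob C) : hom (bip A (bip B C')) (bip (bip A B) C') :=
  comp in1 (comp in1 pi1 + comp in2 (comp pi1 pi2))
  + comp in2 (comp pi2 pi2).
Definition bswap (A B : ob C) : hom (bip A B) (bip B A) :=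
  comp in1 pi2 + comp in2 pi1.

Definition gauss_smc : smc_data :=
  @SmcData (ob C) gmap gid gcomp bip gtensm zob
    (fun A B C' => gpure (bassoc A B C'))
    (fun A B C' => gpure (bassoc_inv A B C'))
    (fun A => gpure (@pi2 C zob A))
    (fun A => gpure (@in2 C zob A))
    (fun A => gpure (@pi1 C A zob))
    (fun A => gpure (@in1 C A zob))
    (fun A B => gpure (bswap A B)).

Definition gcopy (A : ob C) : gmap A (bip A A) := gpure (col (idm A) (idm A)).
Definition gdel (A : ob C) : gmap A zob := gpure 0.

End Gauss.

(* Main.v *)
From mathcomp Require Import all_boot all_algebra.
Require Import Defs.
From Stdlib Require Import ProofIrrelevance.
Set Implicit Arguments. Unset Strict Implicit. Unset Printing Implicit Defensive.
Import GRing.Theory.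
Local Open Scope ring_scope.

Section Aux.
Variable C : DagAddCat.

Lemma comp1r' (A B : ob C) (f : hom A B) : comp f (idm A) = f.
Proof. by case: (dac_ax C) => _ [_ []]. Qed.
Lemma dag1' (A : ob C) : dag (idm A) = idm A.
Proof. by case: (dac_ax C) => _ [_ [_ [_ [_ []]]]]. Qed.
Lemma idzob : idm (@zob C) = 0.
Proof. by case: (dac_ax C) => _ [_ [_ [_ [_ [_ [_ [_ [_ []]]]]]]]]. Qed.
Lemma bipid (A B : ob C) : comp (@in1 C A B) pi1 + comp in2 pi2 = idm (bip A B).
Proof. by case: (dac_ax C) => _ [_ [_ [_ [_ [_ [_ [_ [_ [_ [_ [_ [_ [_ []]]]]]]]]]]]]]. Qed.
Lemma dag0' (A B : ob C) : dag (0 : hom A B) = 0.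
Proof.
have h := @dagD C A B 0 0; rewrite addr0 in h.
by apply: (addrI (dag (0 : hom A B))); rewrite -h addr0.
Qed.
Lemma homzob_eq (A : ob C) (f g : hom A zob) : f = g.
Proof.
by rewrite -(comp1l f) -(comp1l g) idzob !comp0l.
Qed.
Lemma hom_ext_out (Y A B : ob C) (h k : hom Y (bip A B)) :
  comp pi1 h = comp pi1 k -> comp pi2 h = comp pi2 k -> h = k.
Proof.
move=> e1 e2; rewrite -(comp1l h) -(comp1l k) -bipid !compDl -!compA'.
by rewrite e1 e2.
Qed.
Lemma hom_ext_in (Y A B : ob C) (h k : hom (bip A B) Y) :
  comp h in1 = comp k in1 -> comp h in2 = comp k in2 -> h = k.
Proof.
move=> e1 e2; rewrite -(comp1r' h) -(comp1r' k) -bipid !compDr !compA'.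
by rewrite e1 e2.
Qed.
Lemma pi1in1' (A B D : ob C) (x : hom D A) : comp (@pi1 C A B) (comp in1 x) = x.
Proof. by rewrite compA' pi1in1 comp1l. Qed.
Lemma pi2in2' (A B D : ob C) (x : hom D B) : comp (@pi2 C A B) (comp in2 x) = x.
Proof. by rewrite compA' pi2in2 comp1l. Qed.
Lemma pi1in2' (A B D : ob C) (x : hom D B) : comp (@pi1 C A B) (comp in2 x) = 0.
Proof. by rewrite compA' pi1in2 comp0l. Qed.
Lemma pi2in1' (A B D : ob C) (x : hom D A) : comp (@pi2 C A B) (comp in1 x) = 0.
Proof. by rewrite compA' pi2in1 comp0l. Qed.

Lemma gmap_eq (X A B : ob C) (f g : gmap X A B) :
  gf f = gf g -> gp f = gp g -> gx f = gx g -> f = g.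
Proof.
case: f => f p x P; case: g => g q y Q /= e1 e2 e3; subst.
by rewrite (proof_irrelevance _ P Q).
Qed.
End Aux.

Fact lk : unit. Proof. exact tt. Qed.
Definition Ldsum := locked_with lk (@dsum).
Definition Lcol := locked_with lk (@col).
Definition Lbassoc := locked_with lk (@bassoc).
Definition Lbassoc_inv := locked_with lk (@bassoc_inv).
Definition Lbswap := locked_with lk (@bswap).
Arguments Ldsum {C A B A' B'} f g.
Arguments Lcol {C Y A B} x y.
Arguments Lbassoc {C} A B C'.
Arguments Lbassoc_inv {C} A B C'.
Arguments Lbswap {C} A B.
Lemma dsumE : @dsum = @Ldsum. Proof. by rewrite /Ldsum unlock. Qed.
Lemma colE : @col = @Lcol. Proof. by rewrite /Lcol unlock. Qed.
Lemma bassocE : @bassoc = @Lbassoc. Proof. by rewrite /Lbassoc unlock. Qed.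
Lemma bassoc_invE : @bassoc_inv = @Lbassoc_inv. Proof. by rewrite /Lbassoc_inv unlock. Qed.
Lemma bswapE : @bswap = @Lbswap. Proof. by rewrite /Lbswap unlock. Qed.
Ltac unL := rewrite -?dsumE -?colE -?bassocE -?bassoc_invE -?bswapE.
Ltac toL := rewrite ?dsumE ?colE ?bassocE ?bassoc_invE ?bswapE.

Ltac simp0 := repeat progress rewrite ?dagD ?dag_comp ?dag_in1 ?dag_in2 ?dag_pi1
  ?dag_pi2 ?dagK ?dag0' ?dag1' ?compDl ?compDr -?compA' ?pi1in1' ?pi1in2'
  ?pi2in1' ?pi2in2' ?pi1in1 ?pi1in2 ?pi2in1 ?pi2in2 ?comp0l ?comp0r ?comp1l
  ?comp1r' ?addr0 ?add0r.

Ltac ext0 := repeat first [ apply: homzob_eq | apply: hom_ext_out | apply: hom_ext_in ].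

Ltac solve0 := unL; rewrite /dsum /col /bassoc /bassoc_inv /bswap; ext0; simp0; rewrite ?addrA //.

Section Alg.
Variable C : DagAddCat.
Implicit Types A B D E F G : ob C.

Lemma P1 A B D E (f : hom A D) (g : hom B E) : comp pi1 (Ldsum f g) = comp f pi1.
Proof. solve0. Qed.
Lemma P2 A B D E (f : hom A D) (g : hom B E) : comp pi2 (Ldsum f g) = comp g pi2.
Proof. solve0. Qed.
Lemma C1 Y A B (x : hom Y A) (y : hom Y B) : comp pi1 (Lcol x y) = x.
Proof. solve0. Qed.
Lemma C2 Y A B (x : hom Y A) (y : hom Y B) : comp pi2 (Lcol x y) = y.
Proof. solve0. Qed.
Lemma A1 A B D : comp pi1 (Lbassoc A B D) = comp pi1 pi1.
Proof. solve0. Qed.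
Lemma A21 A B D : comp pi1 (comp pi2 (Lbassoc A B D)) = comp pi2 pi1.
Proof. solve0. Qed.
Lemma A22 A B D : comp pi2 (comp pi2 (Lbassoc A B D)) = pi2.
Proof. solve0. Qed.
Lemma B11 A B D : comp pi1 (comp pi1 (Lbassoc_inv A B D)) = pi1.
Proof. solve0. Qed.
Lemma B21 A B D : comp pi2 (comp pi1 (Lbassoc_inv A B D)) = comp pi1 pi2.
Proof. solve0. Qed.
Lemma B2 A B D : comp pi2 (Lbassoc_inv A B D) = comp pi2 pi2.
Proof. solve0. Qed.
Lemma S1 A B : comp pi1 (Lbswap A B) = pi2.
Proof. solve0. Qed.
Lemma S2 A B : comp pi2 (Lbswap A B) = pi1.
Proof. solve0. Qed.
Lemma Ddsum A B D E (f : hom A D) (g : hom B E) : dag (Ldsum f g) = Ldsum (dag f) (dag g).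
Proof. solve0. Qed.
Lemma Z1 A B D E : Ldsum (0 : hom A D) (0 : hom B E) = 0.
Proof. solve0. Qed.
Lemma Z2 Y A B : Lcol (0 : hom Y A) (0 : hom Y B) = 0.
Proof. solve0. Qed.
Lemma Dassoc A B D : dag (Lbassoc A B D) = Lbassoc_inv A B D.
Proof. solve0. Qed.
Lemma Dassoc_inv A B D : dag (Lbassoc_inv A B D) = Lbassoc A B D.
Proof. by rewrite -Dassoc dagK. Qed.
Lemma Dswap A B : dag (Lbswap A B) = Lbswap B A.
Proof. solve0. Qed.

Lemma P1r Z A B D E (f : hom A D) (g : hom B E) (r : hom Z _) :
  comp pi1 (comp (Ldsum f g) r) = comp f (comp pi1 r).
Proof. by rewrite !compA' P1. Qed.
Lemma P2r Z A B D E (f : hom A D) (g : hom B E) (r : hom Z _) :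
  comp pi2 (comp (Ldsum f g) r) = comp g (comp pi2 r).
Proof. by rewrite !compA' P2. Qed.
Lemma C1r Z Y A B (x : hom Y A) (y : hom Y B) (r : hom Z Y) : comp pi1 (comp (Lcol x y) r) = comp x r.
Proof. by rewrite !compA' C1. Qed.
Lemma C2r Z Y A B (x : hom Y A) (y : hom Y B) (r : hom Z Y) : comp pi2 (comp (Lcol x y) r) = comp y r.
Proof. by rewrite !compA' C2. Qed.
Lemma A1r Z A B D (r : hom Z _) : comp pi1 (comp (Lbassoc A B D) r) = comp pi1 (comp pi1 r).
Proof. by rewrite !compA' A1. Qed.
Lemma A21r Z A B D (r : hom Z _) : comp pi1 (comp pi2 (comp (Lbassoc A B D) r)) = comp pi2 (comp pi1 r).
Proof. by move: (congr1 (fun h => comp h r) (A21 A B D)) => /=; rewrite -!compA'. Qed.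
Lemma A22r Z A B D (r : hom Z _) : comp pi2 (comp pi2 (comp (Lbassoc A B D) r)) = comp pi2 r.
Proof. by move: (congr1 (fun h => comp h r) (A22 A B D)) => /=; rewrite -!compA'. Qed.
Lemma B11r Z A B D (r : hom Z _) : comp pi1 (comp pi1 (comp (Lbassoc_inv A B D) r)) = comp pi1 r.
Proof. by move: (congr1 (fun h => comp h r) (B11 A B D)) => /=; rewrite -!compA'. Qed.
Lemma B21r Z A B D (r : hom Z _) : comp pi2 (comp pi1 (comp (Lbassoc_inv A B D) r)) = comp pi1 (comp pi2 r).
Proof. by move: (congr1 (fun h => comp h r) (B21 A B D)) => /=; rewrite -!compA'. Qed.
Lemma B2r Z A B D (r : hom Z _) : comp pi2 (comp (Lbassoc_inv A B D) r) = comp pi2 (comp pi2 r).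
Proof. by rewrite !compA' B2. Qed.
Lemma S1r Z A B (r : hom Z _) : comp pi1 (comp (Lbswap A B) r) = comp pi2 r.
Proof. by rewrite !compA' S1. Qed.
Lemma S2r Z A B (r : hom Z _) : comp pi2 (comp (Lbswap A B) r) = comp pi1 r.
Proof. by rewrite !compA' S2. Qed.
End Alg.


Ltac simp := repeat progress rewrite ?Z1 ?Z2 ?comp0l ?comp0r ?addr0 ?add0r ?dagD ?dag_comp ?dag_in1 ?dag_in2 ?dag_pi1
  ?dag_pi2 ?dagK ?dag0' ?dag1' ?Ddsum ?Dassoc ?Dassoc_inv ?Dswap ?compDl ?compDr -?compA'
  ?P1r ?P2r ?C1r ?C2r ?A1r ?A21r ?A22r ?B11r ?B21r ?B2r ?S1r ?S2r
  ?P1 ?P2 ?C1 ?C2 ?A1 ?A21 ?A22 ?B11 ?B21 ?B2 ?S1 ?S2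
  ?pi1in1' ?pi1in2' ?pi2in1' ?pi2in2' ?pi1in1 ?pi1in2 ?pi2in1 ?pi2in2 ?comp1l ?comp1r'.

Ltac ext := repeat first [ apply: homzob_eq | apply: hom_ext_out ].

Ltac solve_hom := simp; ext; simp; rewrite ?addrA //.

Ltac solve_g := apply: gmap_eq; rewrite /=; toL; solve_hom.


Theorem mainTheorem1 (C : DagAddCat) (X : ob C) :
  @is_markov_category (gauss_smc X) (@gcopy C X) (@gdel C X).
Proof.
repeat split; intros; rewrite /smiddle /gcopy /gdel /=.
all: solve [solve_g].
Qed.
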